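(* Let $\succ=(\succ_s)_{s\in S}$ be a priority profile such that every $\succ_s$ is a partial order on $I$. Suppose $K\ge 1$ and $\mu_1,\dots,\mu_K$ are stable matchings for $\succ$ such that $\mu_{k'}$ Pareto dominates $\mu_k$ for all $1\le k<k'\le K$. Then there exists an extension profile $\succ^*\in\mathcal{E}(\succ)$ such that every one of $\mu_1,\dots,\mu_K$ is stable for $\succ^*$.
   Context: All binary relations $B$ considered are asymmetric: $(x,y)\in B$ implies $(y,x)\notin B$. A binary relation $B$ on $X$ is complete if $x\neq y$ implies $(x,y)\in B$ or $(y,x)\in B$; negatively transitive if $(x,y)\notin B$ and $(y,z)\notin B$ imply $(x,z)\notin B$; transitive if $(x,y),(y,z)\in B$ imply $(x,z)\in B$; acyclic if for all $K\ge2$ and $x_0,\dots,x_K\in X$, [$(x_{k-1},x_k)\in B$ and $(x_k,x_{k-1})\notin B$ for all $k=1,\dots,K$] implies $(x_K,x_0)\notin B$. A partial order is an asymmetric transitive relation; a weak order is a negatively transitive partial order; a total order is a complete weak order. $\mathcal{A},\mathcal{P},\mathcal{W},\mathcal{T}$ denote the sets of acyclic, partial order, weak order, total order (asymmetric) relations on $I$. School choice setup: $I$ is a finite set of students with $|I|\ge 3$, $S$ a finite set of schools. Each student $i$ has a total order $P_i$ on $S\cup\{\emptyset\}$ ($\emptyset$ = outside option); $sR_is'$ means $sP_is'$ or $s=s'$. Each school $s$ has capacity $q_s\in\mathbb{Z}_{++}$ and a priority relation $\succ_s$, an asymmetric binary relation on $I$ ($(i,j)\in\succ_s$: $i$ has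 higher priority than $j$ at $s$). A matching $\mu$ assigns each $i$ to $\mu(i)\in S\cup\{\emptyset\}$, with $\mu(s)=\{i:\mu(i)=s\}$. $\mu$ is individually rational if $\mu(i)R_i\emptyset$ for all $i$; non-wasteful if $sP_i\mu(i)$ implies $|\mu(s)|=q_s$; fair for $\succ$ if there are no $s$, $j\in\mu(s)$, $i\notin\mu(s)$ with $sR_i\mu(i)$ and $(i,j)\in\succ_s$; stable for $\succ$ if individually rational, non-wasteful and fair for $\succ$ (capacities $|\mu(s)|\le q_s$ are required of matchings). $\mu$ is Pareto dominated by $\mu'$ if $\mu'(i)R_i\mu(i)$ for all $i$ and $\mu'(i)P_i\mu(i)$ for some $i$. An extension of $\succ_s$ is a total order $\hat\succ_s$ on $I$ with $\succ_s\subseteq\hat\succ_s$; $E(\succ_s)$ is the set of extensions of $\succ_s$ and $\mathcal{E}(\succ)$ the set of profiles $(\succ'_s)_{s\in S}$ with $\succ'_s\in E(\succ_s)$ for all $s$. *)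

(* Defs.v *)
From mathcomp Require Import all_boot.
Set Implicit Arguments. Unset Strict Implicit. Unset Printing Implicit Defensive.

Section Relations.
Variable T : Type.
Definition asymmetric (r : rel T) : Prop := forall x y, r x y -> ~~ r y x.
Definition rtransitive (r : rel T) : Prop :=
  forall x y z, r x y -> r y z -> r x z.
Definition neg_transitive (r : rel T) : Prop :=
  forall x y z, ~~ r x y -> ~~ r y z -> ~~ r x z.
End Relations.

Definition rcomplete (T : eqType) (r : rel T) : Prop :=
  forall x y, x != y -> r x y || r y x.

Definition partial_order (T : Type) (r : rel T) : Prop :=
  asymmetric r /\ rtransitive r.
Definition weak_order (T : Type) (r : rel T) : Prop :=
  partial_order r /\ neg_transitive r.
Definition total_order (T : eqType) (r : rel T) : Prop :=
  weak_order r /\ rcomplete r.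

Section SchoolChoice.
(* students I, schools S; None = outside option (emptyset) *)
Variables (I S : finType).
Variable (P : I -> rel (option S)).   (* P i a b : a P_i b (strict preference) *)
Variable (q : S -> nat).

Definition R (i : I) (a b : option S) : bool := P i a b || (a == b).

Definition assigned (mu : I -> option S) (s : S) : {set I} :=
  [set i | mu i == Some s].

Definition is_matching (mu : I -> option S) : Prop :=
  forall s, #|assigned mu s| <= q s.

Definition individually_rational (mu : I -> option S) : Prop :=
  forall i, R i (mu i) None.

Definition non_wasteful (mu : I -> option S) : Prop :=
  forall i s, P i (Some s) (mu i) -> #|assigned mu s| = q s.

Definition fair (pr : S -> rel I) (mu : I -> option S) : Prop :=
  ~ exists s j i, [/\ mu j = Some s, mu i <> Some s,
                      R i (Some s) (mu i) & pr s i j].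

Definition stable (pr : S -> rel I) (mu : I -> option S) : Prop :=
  [/\ is_matching mu, individually_rational mu, non_wasteful mu & fair pr mu].

Definition pareto_dominates (mu' mu : I -> option S) : Prop :=
  (forall i, R i (mu' i) (mu i)) /\ exists i, P i (mu' i) (mu i).

Definition extension_profile (pr pr' : S -> rel I) : Prop :=
  forall s, total_order (pr' s) /\ (forall i j, pr s i j -> pr' s i j).
End SchoolChoice.

(* Main.v *)
Require Import Defs.
From mathcomp Require Import all_boot.
From mathcomp Require Import zify.

Lemma lexlt M a b a' b' : b < M -> b' < M -> (a < a') || ((a == a') && (b < b')) -> a*M + b < a'*M + b'.
Proof. move=> hb hb' /orP[h|/andP[/eqP -> h]]; nia. Qed.
Lemma lexinj M a b a' b' : b < M -> b' < M -> a*M + b = a'*M + b' -> a = a' /\ b = b'.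
Proof.
move=> hb hb' E; case: (ltngtP a a') => [h|h|e].
- by have := @lexlt M a b a' b' hb hb'; rewrite h E ltnn => /(_ isT).
- by have := @lexlt M a' b' a b hb' hb; rewrite h E ltnn => /(_ isT).
- subst a'; split=> //; lia.
Qed.

Lemma bigmin_le (T : eqType) (r : seq T) (p : pred T) (F : T -> nat) K k :
  k \in r -> p k -> \big[minn/K]_(i <- r | p i) F i <= F k.
Proof.
move=> kr pk; elim: r kr => // a r IH; rewrite inE big_cons => /orP [/eqP <- | kr].
  by rewrite pk geq_minl.
case: (p a); last exact: IH.
by apply: leq_trans (geq_minr _ _) (IH kr).
Qed.

Theorem theorem1 (I S : finType) (P : I -> rel (option S)) (q : S -> nat)
    (pr : S -> rel I) :
  2 < #|I| ->
  (forall i, total_order (P i)) ->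
  (forall s, 0 < q s) ->
  (forall s, partial_order (pr s)) ->
  forall (K : nat) (mu : 'I_K -> I -> option S),
    0 < K ->
    (forall k, stable P q pr (mu k)) ->
    (forall k k' : 'I_K, k < k' -> pareto_dominates P (mu k') (mu k)) ->
    exists pr' : S -> rel I,
      extension_profile pr pr' /\ forall k, stable P q pr' (mu k).
Proof.
move=> _ HP _ Hpr K mu K0 Hst Hpar.
pose M := #|I|.
pose pred s x (k : 'I_K) := [exists j, ((j == x) || pr s x j) && (mu k j == Some s)].
pose g s x := \big[minn/K]_(k < K | pred s x k) (k:nat).
pose c s x := #|[set z | pr s z x]|.
pose h s x := (g s x * M + c s x) * M + enum_rank x.
have g_le s x k : pred s x k -> g s x <= k.
  by move=> pk; exact: (@bigmin_le _ _ (pred s x) (fun i => i:nat) K k (mem_index_enum k) pk).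
have g_gt s x n : (forall k', pred s x k' -> n < k') -> n < K -> n < g s x.
  move=> H nK; apply: (big_ind (fun m => n < m)) => //.
  by move=> a b ha hb; rewrite leq_min ha hb.
have g_K s x : g s x <= K.
  apply: (big_ind (fun m => m <= K)) => //.
    by move=> a b ha _; apply: leq_trans (geq_minl _ _) ha.
  by move=> k _; apply: ltnW.
have g_mono s x y : (forall k, pred s y k -> pred s x k) -> g s x <= g s y.
  move=> H; apply: (big_ind (fun m => g s x <= m)) => //.
  - by move=> a b ha hb; rewrite leq_min ha hb.
  - by move=> k /H; apply: g_le.
have irr s x : ~~ pr s x x.
  by apply/negP => hx; have := (Hpr s).1 _ _ hx; rewrite hx.
have c_lt s x : c s x < M.
  rewrite /c /M -cardsT; apply: proper_card; rewrite properT.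
  apply/eqP => E; have : x \in [set: I] by [].
  by rewrite -E inE (negbTE (irr s x)).
have r_lt (x : I) : enum_rank x < M by exact: ltn_ord.
have Pirr i a : ~~ P i a a.
  by apply/negP => hx; have := (HP i).1.1.1 _ _ hx; rewrite hx.
have h_lt s x y : (g s x < g s y) || ((g s x == g s y) && (c s x < c s y)) -> h s x < h s y.
  move=> H; apply: lexlt => //; apply/orP; left.
  by apply: lexlt.
have h_inj s x y : h s x = h s y -> x = y.
  move=> E; have [_ E2] := @lexinj M _ _ _ _ (r_lt x) (r_lt y) E.
  by apply: enum_rank_inj; apply: val_inj.
exists (fun s x y => h s x < h s y); split.
  move=> s; split.
    split; [split; [split|]|].
    - by move=> x y /= hxy; rewrite -leqNgt ltnW.
    - by move=> x y z /= ; apply: ltn_trans.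
    - move=> x y z /=; rewrite -!leqNgt => a b; exact: leq_trans b a.
    - move=> x y /= nxy; case: (ltngtP (h s x) (h s y)) => // /h_inj E.
      by rewrite E eqxx in nxy.
  move=> x y hxy /=; apply: h_lt.
  have c_lt' : c s x < c s y.
    apply: proper_card; rewrite properE; apply/andP; split.
      apply/subsetP => z; rewrite !inE => hz; exact: (Hpr s).2 _ _ _ hz hxy.
    apply/subsetP => /(_ x); rewrite !inE hxy (negbTE (irr s x)) => /(_ isT) //.
  have gm : g s x <= g s y.
    apply: g_mono => k /existsP [j /andP [/orP [/eqP-> | hyj] hj]].
      by apply/existsP; exists y; rewrite hxy orbT hj.
    by apply/existsP; exists j; rewrite ((Hpr s).2 _ _ _ hxy hyj) orbT hj.
  by move: gm; rewrite leq_eqVlt => /orP [-> | ->]; rewrite ?c_lt' ?orbT.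
move=> k; have [Hm Hir Hnw Hf] := Hst k; split => //.
move=> [s [j [i [Hj Hi HR Hij]]]] /=.
have HPi : P i (Some s) (mu k i).
  by move: HR; rewrite /R => /orP [// | /eqP E]; rewrite E in Hi.
have gj : g s j <= k.
  by apply: g_le; apply/existsP; exists j; rewrite eqxx Hj eqxx.
have gi : k < g s i.
  apply: g_gt => //.
  move=> k' /existsP [j' /andP [hj' /eqP hmj']].
  rewrite ltnNge; apply/negP => kk.
  have HRk : R P i (mu k i) (mu k' i).
    move: kk; rewrite leq_eqVlt => /orP [/eqP e | lt].
      have ek : k = k' by apply: val_inj; rewrite /= e.
      by rewrite ek /R eqxx orbT.
    exact: (Hpar k' k lt).1.
  have HPk' : P i (Some s) (mu k' i).
    move: HRk; rewrite /R => /orP [h2 | /eqP <-] //.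
    exact: (HP i).1.1.2 _ _ _ HPi h2.
  have Hnk' : mu k' i <> Some s.
    by move=> E; rewrite E in HPk'; rewrite (negbTE (Pirr _ _)) in HPk'.
  case/orP: hj' => [/eqP E | hij'].
    by subst j'; apply: Hnk'.
  have [_ _ _ Hf'] := Hst k'; apply: Hf'.
  exists s, j', i; split => //.
  by rewrite /R HPk'.
have : h s j < h s i by apply: h_lt; rewrite (leq_ltn_trans gj gi).
by rewrite ltnNge ltnW.
Qed.
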